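(* Let $X$ be an $n$-dimensional projective space over a field, $K$ a $k$-dimensional subspace of $X$, and let $s_1,s_2,t_1,t_2$ be integers with $-1\le t_1\le s_1\le\dim K$ and $-1\le t_2\le s_2\le\dim(X/K)$. Put $t:=t_1+t_2+1$ and $s:=s_1+s_2+1$. If $\mathcal B_K\subseteq\mathrm{Gr}_{t_1}(K)$ blocks $\mathcal S_K\subseteq\mathrm{Gr}_{s_1}(K)$ and $\mathcal B_{X/K}\subseteq\mathrm{Gr}_{t_2}(X/K)$ blocks $\mathcal S_{X/K}\subseteq\mathrm{Gr}_{s_2}(X/K)$, then $\mathcal B\subseteq\mathrm{Gr}_t(X)$ blocks $\mathcal S\subseteq\mathrm{Gr}_s(X)$, where $$\mathcal B:=\{T\in\mathrm{Gr}(X): K\cap T\in\mathcal B_K,\ \langle K,T\rangle\in\mathcal B_{X/K}\},\qquad \mathcal S:=\{S\in\mathrm{Gr}(X):K\cap S\in\mathcal S_K,\ \langle K,S\rangle\in\mathcal S_{X/K}\}.$$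
   Context: Projective dimension is used (the empty subspace has dimension $-1$). $\mathrm{Gr}_d(Y)$ denotes the set of $d$-dimensional subspaces of a projective space $Y$ and $\mathrm{Gr}(Y)$ the set of all subspaces. For a $k$-dimensional subspace $K$ of $X$, the quotient space $X/K$ is the projective space of dimension $\dim X-k-1$ whose $r$-dimensional subspaces are the $(r+k+1)$-dimensional subspaces of $X$ containing $K$ (its $(-1)$-dimensional subspace is $K$); the span $\langle K,T\rangle$ is regarded as an element of $X/K$, and containment in $X/K$ is containment in $X$. For $t\le s$, a set $\mathcal B$ of $t$-dimensional subspaces of a projective space is said to block a set $\mathcal S$ of $s$-dimensional subspaces (or be a partial blocking set for $\mathcal S$) if every $S\in\mathcal S$ contains some $T\in\mathcal B$. *)

(* Defs.v *)
(* The n-dimensional projective space over a field F is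
   modelled as PG(n,F): its subspaces are the vector subspaces of
   F^(n+1) = 'rV[F]_(n.+1), with projective dimension = vector dim - 1. *)
From HB Require Import structures.
From mathcomp Require Import all_boot all_order all_algebra.
Set Implicit Arguments. Unset Strict Implicit. Unset Printing Implicit Defensive.
Import GRing.Theory Num.Theory.
Local Open Scope ring_scope.

Section Proj.
Variables (F : fieldType) (n : nat).
Notation V := ('rV[F]_(n.+1)).

Definition pdim (U : {vspace V}) : int := (\dim U)%:Z - 1.

Definition GrX (d : int) (U : {vspace V}) : Prop := pdim U = d.

Definition GrSub (K : {vspace V}) (d : int) (U : {vspace V}) : Prop :=
  (U <= K)%VS /\ pdim U = d.

(* dimension, inside the quotient X/K, of a subspace containing K *)
Definition qdim (K U : {vspace V}) : int := pdim U - pdim K - 1.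

Definition GrQuot (K : {vspace V}) (d : int) (U : {vspace V}) : Prop :=
  (K <= U)%VS /\ qdim K U = d.

Definition blocks (B S : {vspace V} -> Prop) : Prop :=
  forall S0, S S0 -> exists2 T, B T & (T <= S0)%VS.

Definition subfam (A B : {vspace V} -> Prop) : Prop := forall U, A U -> B U.
End Proj.

(* Main.v *)
Require Import Defs.
From HB Require Import structures.
From mathcomp Require Import all_boot all_order all_algebra.
From mathcomp Require Import zify.
Import GRing.Theory Num.Theory.
Local Open Scope ring_scope.

Lemma dimpart (F : fieldType) (n : nat) (K T : {vspace 'rV[F]_(n.+1)}) (t1 t2 : int) :
  pdim (K :&: T)%VS = t1 -> qdim K (K + T)%VS = t2 -> pdim T = t1 + t2 + 1.
Proof.
rewrite /qdim /pdim => h1 h2.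
have H := dimv_sum_cap K T.
lia.
Qed.

Lemma blockpart (F : fieldType) (n : nat) (K T1 T2 S0 : {vspace 'rV[F]_(n.+1)}) :
  (T1 <= K :&: S0)%VS -> (K <= T2)%VS -> (T2 <= K + S0)%VS ->
  let T := (T1 + ((T2 :&: S0) :\: K))%VS in
  [/\ (K :&: T)%VS = T1, (K + T)%VS = T2 & (T <= S0)%VS].
Proof.
move=> hT1 hK hT2 T.
set W := ((T2 :&: S0) :\: K)%VS.
have hT1K : (T1 <= K)%VS by apply: subv_trans hT1 (capvSl _ _).
have hT1S : (T1 <= S0)%VS by apply: subv_trans hT1 (capvSr _ _).
have hW : (W <= T2 :&: S0)%VS by apply: diffvSl.
have hWT2 : (W <= T2)%VS by apply: subv_trans hW (capvSl _ _).
have hWS : (W <= S0)%VS by apply: subv_trans hW (capvSr _ _).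
have WK0 : (W :&: K = 0)%VS by apply: capv_diff.
have dWK : \dim (K + W) = (\dim K + \dim W)%N.
  by have := dimv_sum_cap K W; rewrite capvC WK0 dimv0 addn0.
have dT : \dim T = (\dim T1 + \dim W)%N.
  have := dimv_sum_cap T1 W.
  have -> : (T1 :&: W = 0)%VS.
    apply/eqP; rewrite -subv0 -WK0 capvC; exact: capvS.
  by rewrite dimv0 addn0.
have KT : (K + T = K + W)%VS.
  by rewrite /T addvA; congr (_ + _)%VS; apply/addv_idPl.
have c1 := dimv_cap_compl (T2 :&: S0) K.
have e1 : (T2 :&: S0 :&: K = K :&: S0)%VS.
  by rewrite -capvA (capvC S0 K) capvA; congr (_ :&: _)%VS; apply/capv_idPr.
have e2 : (T2 + S0 = K + S0)%VS.
  apply/eqP; rewrite eqEsubv; apply/andP; split.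
    by apply: subv_trans (addvS hT2 (subvv S0)) _; rewrite -addvA addvv.
  exact: addvS.
have c2 := dimv_sum_cap T2 S0.
have c3 := dimv_sum_cap K S0.
rewrite e1 in c1; rewrite e2 in c2.
fold W in c1.
have dKT : \dim (K + T) = \dim T2 by rewrite KT dWK; lia.
have sKT : (K + T <= T2)%VS.
  by rewrite /T !subv_add hK hWT2 (subv_trans hT1K hK).
have eKT : (K + T)%VS = T2.
  by apply/eqP; rewrite eqEdim sKT dKT leqnn.
split => //.
  have c4 := dimv_sum_cap K T.
  apply/eqP; rewrite eq_sym eqEdim subv_cap hT1K addvSl /=.
  by rewrite eKT in c4; lia.
by rewrite /T subv_add hT1S hWS.
Qed.

Theorem lemma3p5 (F : fieldType) (n : nat) (K : {vspace 'rV[F]_(n.+1)})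
  (k s1 s2 t1 t2 : int)
  (BK SK BQ SQ : {vspace 'rV[F]_(n.+1)} -> Prop) :
  pdim K = k ->
  -1 <= t1 -> t1 <= s1 -> s1 <= k ->
  -1 <= t2 -> t2 <= s2 -> s2 <= (n%:Z - k - 1) ->
  subfam BK (GrSub K t1) -> subfam SK (GrSub K s1) -> blocks BK SK ->
  subfam BQ (GrQuot K t2) -> subfam SQ (GrQuot K s2) -> blocks BQ SQ ->
  let t := t1 + t2 + 1 in
  let s := s1 + s2 + 1 in
  let B := fun T => BK (K :&: T)%VS /\ BQ (K + T)%VS in
  let S := fun S0 => SK (K :&: S0)%VS /\ SQ (K + S0)%VS in
  [/\ subfam B (GrX t), subfam S (GrX s) & blocks B S].
Proof.
move=> _ _ _ _ _ _ _ hBK hSK bK hBQ hSQ bQ t s B S; split.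
- move=> T [h1 h2]; rewrite /GrX /t.
  have [_ e1] := hBK _ h1; have [_ e2] := hBQ _ h2.
  exact: (dimpart _ _ _ _ _ _ e1 e2).
- move=> T [h1 h2]; rewrite /GrX /s.
  have [_ e1] := hSK _ h1; have [_ e2] := hSQ _ h2.
  exact: (dimpart _ _ _ _ _ _ e1 e2).
- move=> S0 [h1 h2].
  have [T1 hT1 sT1] := bK _ h1.
  have [T2 hT2 sT2] := bQ _ h2.
  have [hK _] := hBQ _ hT2.
  have [e1 e2 e3] := blockpart _ _ _ _ _ _ sT1 hK sT2.
  exists (T1 + ((T2 :&: S0) :\: K))%VS; last exact: e3.
  by split; [rewrite e1 | rewrite e2].
Qed.
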